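(* Let $\lambda=(\lambda_1,\dots,\lambda_n)\in\mathbb{R}^n$. (i) Let $Q=(I_1,\dots,I_r)$ be a block for $\lambda$. If $Q$ is positive, then $s_{I_1}(\lambda)+\dots+s_{I_i}(\lambda)>0$ for all $i\in\{1,\dots,r\}$; if $Q$ is negative, then $s_{I_i}(\lambda)+\dots+s_{I_r}(\lambda)\le0$ for all $i\in\{1,\dots,r\}$. (ii) Let $P\in\mathcal{P}_{ord}(n)$, $P=Q_1\cdots Q_k$ a block decomposition of $P$, and $l\in\{1,\dots,k-1\}$. Suppose $P\in\mathcal{P}_{ord}(\lambda)$ and that $Q_l$ is negative or $Q_{l+1}$ is positive. Then $P':=Q_1\cdots Q_{l-1}Q_{l+1}Q_lQ_{l+2}\cdots Q_k\in\mathcal{P}_{ord}(\lambda)$, $|P'|=|P|$ and $\varepsilon(P')=(-1)^{n_ln_{l+1}}\varepsilon(P)$, where $n_l,n_{l+1}$ are the sizes of $Q_l,Q_{l+1}$. Assume now in addition that $\lambda_1+\dots+\lambda_n>0$ and $N(\lambda)=n$. (iii) Let $P=(I_1,\dots,I_r)\in\mathcal{P}_{ord}(\lambda)$, $k\in\{1,\dots,r\}$ and $i_1<\dots<i_k$ in $\{1,\dots,r\}$. Then there is a unique block decomposition $P=Q_1\cdots Q_k$ such that $I_{i_l}$ is a center of $Q_l$ for every $l\in\{1,\dots,k\}$. Moreover $Q_1$ is positive and, if $k\ge2$, $Q_k$ is negative. (iv) Let $P=(I_1,\dots,I_r)\in\mathcal{P}_{ord}(\lambda)$ and $P=Q_1\cdots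 Q_k$ a block decomposition of $P$. Then there is a unique $s\in\{1,\dots,r\}$ such that $P':=(I_s,\dots,I_r,I_1,\dots,I_{s-1})\in\mathcal{P}_{ord}(\lambda)$, and $P'$ is of the form $Q_l\cdots Q_kQ_1\cdots Q_{l-1}$ for a uniquely determined $l\in\{1,\dots,k\}$.
   Context: $s_J(\lambda)=\sum_{i\in J}\lambda_i$. $\delta(\lambda)$ is the minimum of $s_J(\lambda)/|J|$ over subsets $J$ with $s_J(\lambda)>0$; $N(\lambda)$ is the minimum of $|J|$ over subsets with $s_J(\lambda)/|J|=\delta(\lambda)$. $\mathcal{P}_{ord}(n)$: ordered partitions $P=(I_1,\dots,I_k)$ of $\{1,\dots,n\}$ into nonempty blocks, $|P|=k$; $\mathcal{P}_{ord}(\lambda)$: those with $s_{I_1}(\lambda)+\dots+s_{I_i}(\lambda)>0$ for all $i$. $\varepsilon(P)=\mathrm{sgn}(\sigma_P)$ with $\sigma_P$ the unique permutation such that $\sigma_P^{-1}$ maps $\{n_1+\dots+n_i+1,\dots,n_1+\dots+n_{i+1}\}$ increasingly onto $I_{i+1}$ ($n_i=|I_i|$). Blocks: an ordered partition $Q=(I_1,\dots,I_r)$ of a subset $I\subset\{1,\dots,n\}$ (its support; its size is $|I|$) is a block with center $I_k$ ($k\in\{1,\dots,r\}$) if $s_{I_1}(\lambda)+\dots+s_{I_i}(\lambda)>0$ for all $i\in\{1,\dots,k-1\}$ and $s_{I_j}(\lambda)+\dots+s_{I_r}(\lambda)\le0$ for all $j\in\{k+1,\dots,r\}$; $Q$ is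 a block if it is a block with some center; it is positive if $s_I(\lambda)>0$ and negative otherwise. A block decomposition of $P\in\mathcal{P}_{ord}(n)$ is a sequence of blocks $Q_1,\dots,Q_k$, $Q_l=(I^l_1,\dots,I^l_{r_l})$, with $P=(I^1_1,\dots,I^1_{r_1},\dots,I^k_1,\dots,I^k_{r_k})$, written $P=Q_1\cdots Q_k$. *)

(* Defs.v *)
(* Indices {1,...,n} are rendered as 'I_n (0-based). *)
From HB Require Import structures.
From mathcomp Require Import all_boot all_order all_fingroup all_algebra.
Set Implicit Arguments. Unset Strict Implicit. Unset Printing Implicit Defensive.
Import Order.TTheory GRing.Theory Num.Theory.
Local Open Scope ring_scope.

Section Defs.
Variables (R : realFieldType) (n : nat) (lam : 'I_n -> R).

Definition sJ (J : {set 'I_n}) : R := \sum_(i in J) lam i.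

Definition ssum (Q : seq {set 'I_n}) : R := \sum_(I <- Q) sJ I.

(* delta(lambda): min of s_J/|J| over J with s_J > 0 (the default value is
   irrelevant whenever some J has s_J > 0, e.g. when s_{[n]} > 0) *)
Definition delta : R :=
  \big[Order.min/(sJ setT / n%:R)]_(J : {set 'I_n} | 0 < sJ J) (sJ J / #|J|%:R).

Definition Nlam : nat :=
  \big[minn/n]_(J : {set 'I_n} | (0 < sJ J) && (sJ J / #|J|%:R == delta)) #|J|.

Definition supp (Q : seq {set 'I_n}) : {set 'I_n} := \bigcup_(I <- Q) I.
End Defs.

Section Defs2.
Variables (n : nat).

Definition opart (Q : seq {set 'I_n}) : Prop :=
  (forall I, I \in Q -> I != set0) /\
  (forall i j, (i < j < size Q)%N -> [disjoint nth set0 Q i & nth set0 Q j]).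

Definition Pord (P : seq {set 'I_n}) : Prop := opart P /\ supp P = setT.

(* epsilon(P) = sgn(sigma_P), where sigma_P^{-1} sends the positions
   n_1+..+n_i+1 .. n_1+..+n_{i+1} increasingly onto I_{i+1}; i.e.
   sigma_P^{-1} p = nth p w p with w the concatenation of the increasingly
   enumerated blocks.  sgn(sigma_P) = sgn(sigma_P^{-1}). *)
Definition eps (R : realFieldType) (P : seq {set 'I_n}) : R :=
  let w := flatten (map (fun B : {set 'I_n} => enum B) P) in
  match [pick s : {perm 'I_n} | [forall p, s p == nth p w p]] with
  | Some s => (-1) ^+ (odd_perm s)
  | None => 0
  end.
End Defs2.

Section Defs3.
Variables (R : realFieldType) (n : nat) (lam : 'I_n -> R).

Definition Pord_lam (P : seq {set 'I_n}) : Prop :=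
  Pord P /\ (forall i, (1 <= i <= size P)%N -> 0 < ssum lam (take i P)).

Definition center_pos (Q : seq {set 'I_n}) (c : nat) : Prop :=
  (c < size Q)%N /\
  (forall j, (1 <= j <= c)%N -> 0 < ssum lam (take j Q)) /\
  (forall j, (c < j < size Q)%N -> ssum lam (drop j Q) <= 0).

Definition is_center (Q : seq {set 'I_n}) (C : {set 'I_n}) : Prop :=
  opart Q /\ exists c, nth set0 Q c = C /\ center_pos Q c.

Definition is_block (Q : seq {set 'I_n}) : Prop :=
  opart Q /\ exists c, center_pos Q c.

Definition positive (Q : seq {set 'I_n}) : Prop := 0 < sJ lam (supp Q).
Definition negative (Q : seq {set 'I_n}) : Prop := ~ positive Q.

Definition block_decomp (P : seq {set 'I_n}) (Qs : seq (seq {set 'I_n})) : Prop :=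
  (forall Q, Q \in Qs -> is_block Q) /\ P = flatten Qs.
End Defs3.

(* Main.v *)
Require Import Defs.
From HB Require Import structures.
From mathcomp Require Import all_boot all_order all_fingroup all_algebra.
From mathcomp Require Import zify ring lra.
Set Implicit Arguments. Unset Strict Implicit. Unset Printing Implicit Defensive.
Import Order.TTheory GRing.Theory Num.Theory.
Local Open Scope ring_scope.

Section Basic.
Variables (R : realFieldType) (n : nat) (lam : 'I_n -> R).

Local Notation ssum := (ssum lam).
Local Notation sJ := (sJ lam).
Local Notation opart := (@opart n).

Lemma ssum_cat a b : ssum (a ++ b) = ssum a + ssum b.
Proof. by rewrite /Defs.ssum big_cat. Qed.

Lemma ssum_cons I a : ssum (I :: a) = sJ I + ssum a.
Proof. by rewrite /Defs.ssum big_cons. Qed.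

Lemma ssum_nil : ssum [::] = 0.
Proof. by rewrite /Defs.ssum big_nil. Qed.

Lemma ssum_td j a : ssum a = ssum (take j a) + ssum (drop j a).
Proof. by rewrite -ssum_cat cat_take_drop. Qed.

Lemma opartE (Q : seq {set 'I_n}) :
  opart Q <-> [/\ (forall I, I \in Q -> I != set0), uniq Q &
     (forall A B, A \in Q -> B \in Q -> A != B -> [disjoint A & B])].
Proof.
split=> [[h1 h2]|[h1 h2 h3]].
  have hd : forall i j, (i < size Q)%N -> (j < size Q)%N -> i != j ->
      [disjoint nth set0 Q i & nth set0 Q j].
    move=> i j hi hj; case: (ltngtP i j) => // hij _.
      by apply: h2; rewrite hij hj.
    by rewrite disjoint_sym; apply: h2; rewrite hij hi.
  split=> //.
    apply/(uniqP set0) => i j; rewrite !inE => hi hj e.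
    apply/eqP; apply/negP => /negP hij.
    have := hd i j hi hj hij; rewrite e -setI_eq0 setIid.
    by apply/negP; apply: h1; rewrite mem_nth.
  move=> A B /(nthP set0)[i hi <-] /(nthP set0)[j hj <-] hne.
  apply: hd => //; apply: contra hne => /eqP ->; done.
split=> // i j /andP[hij hj]; have hi := ltn_trans hij hj.
apply: h3; rewrite ?mem_nth // nth_uniq //; by rewrite neq_ltn hij.
Qed.

Lemma opart_cat a b : opart (a ++ b) -> opart a /\ opart b.
Proof.
move/opartE=> [h1]; rewrite cat_uniq => /and3P[ua _ ub] h3.
split; apply/opartE; split=> //.
- by move=> I hI; apply: h1; rewrite mem_cat hI.
- by move=> A B hA hB; apply: h3; rewrite mem_cat ?hA ?hB.
- by move=> I hI; apply: h1; rewrite mem_cat hI orbT.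
- by move=> A B hA hB; apply: h3; rewrite mem_cat ?hA ?hB orbT.
Qed.

Lemma opart_perm a b : perm_eq a b -> opart a -> opart b.
Proof.
move=> hp /opartE[h1 h2 h3]; apply/opartE; split.
- by move=> I hI; apply: h1; rewrite (perm_mem hp).
- by rewrite -(perm_uniq hp).
- by move=> A B; rewrite -!(perm_mem hp); apply: h3.
Qed.

Lemma opart_uniq a : opart a -> uniq a.
Proof. by case/opartE. Qed.

Lemma supp_cons (I : {set 'I_n}) a : supp (I :: a) = I :|: supp a.
Proof. by rewrite /supp big_cons. Qed.

Lemma supp_nil : @supp n [::] = set0.
Proof. by rewrite /supp big_nil. Qed.

Lemma in_supp (a : seq {set 'I_n}) x : x \in supp a -> exists2 B, B \in a & x \in B.
Proof.
elim: a => [|I a IH]; first by rewrite supp_nil inE.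
rewrite supp_cons inE => /orP[h|/IH[B hB xB]]; first by exists I; rewrite ?mem_head.
by exists B; rewrite // inE hB orbT.
Qed.

Lemma opart_cons (I : {set 'I_n}) a : opart (I :: a) ->
  [/\ I != set0, [disjoint I & supp a] & opart a].
Proof.
move=> h; have [_ ha] := @opart_cat [:: I] a h.
move/opartE: h => [h1 /= /andP[hIa _] h3].
split=> //; first by apply: h1; exact: mem_head.
rewrite -setI_eq0; apply/eqP/setP=> x; rewrite !inE.
apply/negP=> /andP[xI].
move=> /in_supp[B hB xB].
have hIB : I != B by apply: contra hIa => /eqP ->.
have hB' : B \in I :: a by rewrite inE hB orbT.
have := h3 I B (mem_head _ _) hB' hIB.
by rewrite -setI_eq0 => /eqP /setP /(_ x); rewrite !inE xI xB.
Qed.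

Lemma ssum_supp a : opart a -> ssum a = sJ (supp a).
Proof.
elim: a => [|I a IH] h; first by rewrite ssum_nil supp_nil /Defs.sJ big_set0.
have [_ hd ha] := opart_cons h.
rewrite ssum_cons supp_cons IH // /Defs.sJ.
rewrite [RHS](big_setID I) /=; congr (_ + _).
  by apply: eq_bigl => x; rewrite !inE; case: (x \in I); rewrite ?andbF ?andbT ?orbT.
apply: eq_bigl => x; rewrite !inE.
case xI: (x \in I); rewrite ?andbF ?andbT //=.
move: hd; rewrite -setI_eq0 => /eqP /setP /(_ x); rewrite !inE xI /=.
by move=> ->.
Qed.

Lemma mem_fme (a : seq {set 'I_n}) x :
  (x \in flatten (map (fun B : {set 'I_n} => enum B) a)) = (x \in supp a).
Proof.
elim: a => [|I a IH]; first by rewrite supp_nil inE.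
by rewrite /= mem_cat mem_enum IH supp_cons inE.
Qed.

Lemma uniq_fme a : opart a -> uniq (flatten (map (fun B : {set 'I_n} => enum B) a)).
Proof.
elim: a => [|I a IH] h //=.
have [_ hd ha] := opart_cons h.
rewrite cat_uniq enum_uniq IH // andbT /=.
apply/hasPn => x; rewrite mem_fme => xs; rewrite mem_enum.
apply/negP => xI; move: hd; rewrite -setI_eq0 => /eqP /setP /(_ x).
by rewrite !inE xI xs.
Qed.

Lemma size_fme a : opart a -> size (flatten (map (fun B : {set 'I_n} => enum B) a)) = #|supp a|.
Proof.
move=> h; rewrite -(card_uniqP (uniq_fme h)).
by apply: eq_card => x; rewrite mem_fme.
Qed.

End Basic.


Section Part1.
Variables (R : realFieldType) (n : nat) (lam : 'I_n -> R).

Local Notation ssum := (ssum lam).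
Local Notation sJ := (sJ lam).
Local Notation opart := (@opart n).

Lemma cp_pre Q c : center_pos lam Q c -> forall j, (1 <= j <= c)%N -> 0 < ssum (take j Q).
Proof. by case=> _ []. Qed.

Lemma cp_suf Q c : center_pos lam Q c -> forall j, (c < j)%N -> ssum (drop j Q) <= 0.
Proof.
case=> hc [_ h] j hj; case: (ltnP j (size Q)) => hjs.
  by apply: h; rewrite hj hjs.
by rewrite drop_oversize // ssum_nil.
Qed.

Lemma block_pos Q : is_block lam Q -> positive lam Q ->
  forall i, (1 <= i <= size Q)%N -> 0 < ssum (take i Q).
Proof.
case=> hQ [c hc]; rewrite /positive -ssum_supp // => hp i /andP[hi1 hi2].
case: (leqP i c) => hic; first by apply: (cp_pre hc); rewrite hi1 hic.
have := cp_suf hc hic; have := ssum_td lam i Q.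
move=> e hd; apply: (lt_le_trans hp); rewrite e; lra.
Qed.

Lemma block_neg Q : is_block lam Q -> negative lam Q ->
  forall i, (i < size Q)%N -> ssum (drop i Q) <= 0.
Proof.
case=> hQ [c hc]; rewrite /negative /positive -ssum_supp // => hn.
have hn' : ssum Q <= 0 by rewrite leNgt; apply/negP.
move=> i hi; case: (ltnP c i) => hic; first exact: (cp_suf hc).
case: i hi hic => [|i] hi hic; first by rewrite drop0.
have := cp_pre hc (j := i.+1); rewrite hic /= => /(_ isT).
have := ssum_td lam i.+1 Q; move=> e hp; rewrite e in hn'; lra.
Qed.

End Part1.


Section Sign.
Variables (R : realFieldType) (n : nat).

Definition sgnw (w : seq 'I_n) : R :=
  match [pick s : {perm 'I_n} | [forall p, s p == nth p w p]] with
  | Some s => (-1) ^+ (odd_perm s)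
  | None => 0
  end.

Lemma eps_sgnw (P : seq {set 'I_n}) :
  eps R P = sgnw (flatten (map (fun B : {set 'I_n} => enum B) P)).
Proof. by []. Qed.

Lemma nth_swap_other (A D : seq 'I_n) a b (x0 : 'I_n) k :
  k != size A -> k != (size A).+1 ->
  nth x0 (A ++ a :: b :: D) k = nth x0 (A ++ b :: a :: D) k.
Proof.
move=> h1 h2; rewrite !nth_cat; case: ltnP => // hk.
have : (2 <= k - size A)%N by lia.
by case: (k - size A)%N => [|[|t]].
Qed.

Lemma sat_swap (A D : seq 'I_n) a b (s : {perm 'I_n}) (hp : (size A < n)%N)
    (hq : ((size A).+1 < n)%N) :
  [forall p, s p == nth p (A ++ a :: b :: D) p] ->
  [forall p, (tperm (Ordinal hp) (Ordinal hq) * s)%g p == nth p (A ++ b :: a :: D) p].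
Proof.
move=> /forallP h; apply/forallP => x; rewrite permM.
have e := eqP (h (tperm (Ordinal hp) (Ordinal hq) x)); rewrite e.
case: (tpermP (Ordinal hp) (Ordinal hq) x) => [->|->|h1 h2] /=.
- by rewrite !nth_cat ltnn subnn /= ltnNge leqnSn /= subSnn.
- by rewrite !nth_cat ltnn subnn /= ltnNge leqnSn /= subSnn.
- apply/eqP; apply: nth_swap_other.
    apply/eqP => hx; apply: h1; apply/val_inj; exact: hx.
  apply/eqP => hx; apply: h2; apply/val_inj; exact: hx.
Qed.

Lemma size_uniq_n (w : seq 'I_n) : uniq w -> (size w <= n)%N.
Proof.
move=> u; rewrite -(card_uniqP u); have := max_card (mem w).
by rewrite card_ord.
Qed.

Lemma sgnw_swap (A D : seq 'I_n) a b : uniq (A ++ a :: b :: D) ->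
  sgnw (A ++ b :: a :: D) = - sgnw (A ++ a :: b :: D).
Proof.
move=> u; have := size_uniq_n u; rewrite size_cat /= => hsz.
have hp : (size A < n)%N by lia.
have hq : ((size A).+1 < n)%N by lia.
set t := tperm (Ordinal hp) (Ordinal hq).
rewrite /sgnw.
case: (pickP (fun s : {perm 'I_n} => [forall p, s p == nth p (A ++ a :: b :: D) p])) => [s hs|hn].
  have hs' := sat_swap hp hq hs.
  case: pickP => [s' hs'' | hn']; last by rewrite hn' in hs'.
  have -> : s' = (t * s)%g.
    apply/perm.permP => x; move/forallP: hs'' => /(_ x) /eqP ->.
    by move/forallP: hs' => /(_ x) /eqP ->.
  rewrite odd_permM signr_addb odd_tperm.
  have -> : (Ordinal hp != Ordinal hq).
    by apply/eqP => /(congr1 val) /= /eqP; lia.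
  have e1 : (-1) ^+ true = -1 :> R by exact: expr1.
  by rewrite e1 mulN1r.
case: pickP => [s' hs'' | hn'] ; last by rewrite oppr0.
have := sat_swap hp hq hs''.
by rewrite hn.
Qed.

Lemma count_cons' (T : eqType) (f : pred T) x s : count f (x :: s) = (f x + count f s)%N.
Proof. by []. Qed.

Lemma perm_uniqE (s1 s2 : seq 'I_n) : perm_eq s1 s2 -> uniq s1 -> uniq s2.
Proof. by move=> h; rewrite (perm_uniq h). Qed.

Lemma sgnw_move (A X D : seq 'I_n) y : uniq (A ++ X ++ y :: D) ->
  sgnw (A ++ y :: X ++ D) = (-1) ^+ size X * sgnw (A ++ X ++ y :: D).
Proof.
elim: X A => [|x X IH] A u; first by rewrite expr0 mul1r.
have u1 : uniq (A ++ x :: y :: X ++ D).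
  apply: perm_uniqE u; apply/seq.permP => f; rewrite !(count_cat, count_cons') /=; lia.
rewrite sgnw_swap //.
have e1 : A ++ x :: y :: X ++ D = (A ++ [:: x]) ++ y :: X ++ D by rewrite -catA.
have e2 : A ++ (x :: X) ++ y :: D = (A ++ [:: x]) ++ X ++ y :: D by rewrite -catA.
rewrite e1 e2 IH; last by rewrite -e2.
by rewrite /= exprS mulN1r mulNr.
Qed.

Lemma sgnw_blocks (A X Y D : seq 'I_n) : uniq (A ++ X ++ Y ++ D) ->
  sgnw (A ++ Y ++ X ++ D) = (-1) ^+ (size X * size Y) * sgnw (A ++ X ++ Y ++ D).
Proof.
elim: Y A => [|y Y IH] A u; first by rewrite muln0 expr0 mul1r.
have e1 : A ++ (y :: Y) ++ X ++ D = (A ++ [:: y]) ++ Y ++ X ++ D by rewrite -catA.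
have u1 : uniq ((A ++ [:: y]) ++ X ++ Y ++ D).
  apply: perm_uniqE u; apply/seq.permP => f; rewrite !(count_cat, count_cons') /=; lia.
rewrite e1 IH // -catA /= sgnw_move; last first.
  apply: perm_uniqE u; apply/seq.permP => f; rewrite !(count_cat, count_cons') /=; lia.
by rewrite mulrA -exprD /= mulnS addnC.
Qed.

End Sign.


Lemma bigminn_le (I : finType) (x : nat) (P : pred I) (F : I -> nat) j :
  P j -> (\big[minn/x]_(i | P i) F i <= F j)%N.
Proof.
have := mem_index_enum j; rewrite unlock; elim: (index_enum I) => //= i l ih.
rewrite inE => /orP [/eqP-> ->|/ih le Pj]; first by rewrite geq_minl.
case: ifPn => Pi; last exact: le Pj.
exact: leq_trans (geq_minr _ _) (le Pj).
Qed.

Section Key.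
Variables (R : realFieldType) (n : nat) (lam : 'I_n -> R).
Local Notation sJ := (sJ lam).

Lemma sJ_split J : sJ setT = sJ J + sJ (~: J).
Proof. by rewrite /Defs.sJ (big_setID J) setTI setTD. Qed.

Lemma sJ0 : sJ set0 = 0.
Proof. by rewrite /Defs.sJ big_set0. Qed.

Lemma key : 0 < sJ setT -> Nlam lam = n ->
  forall J, 0 < sJ J -> sJ setT <= sJ J.
Proof.
move=> hT hN.
set F := fun J : {set 'I_n} => sJ J / #|J|%:R.
have hmin : forall J, 0 < sJ J -> delta lam <= F J.
  by move=> J hJ; rewrite /delta; apply: bigmin_le_cond.
have [J0 hJ0 eJ0] : exists2 J0, 0 < sJ J0 & delta lam = F J0.
  rewrite /delta.
  apply: (big_ind (fun x => exists2 J0, 0 < sJ J0 & x = F J0)).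
  - by exists setT => //; rewrite /F cardsT card_ord.
  - move=> x y [Jx hx ex] [Jy hy ey]; case: leP => _.
      by exists Jx.
    by exists Jy.
  - by move=> J hJ; exists J.
have hNle : forall J, 0 < sJ J -> F J = delta lam -> (n <= #|J|)%N.
  move=> J hJ e; rewrite -{1}hN /Nlam; apply: bigminn_le.
  by rewrite hJ /= -/(F J) e eqxx.
have hfull : forall J : {set 'I_n}, (n <= #|J|)%N -> J = setT.
  move=> J hJ; have := eqEcard J setT; rewrite subsetT cardsT card_ord hJ. by move/eqP.
have eT : J0 = setT by apply: hfull; apply: hNle => //; rewrite eJ0.
have hcT : #|(setT : {set 'I_n})| = n by rewrite cardsT card_ord.
have hgt : forall J, 0 < sJ J -> J != setT -> sJ setT / n%:R < F J.
  move=> J hJ hne; have := hmin J hJ; rewrite eJ0 eT /F cardsT card_ord le_eqVlt.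
  case/orP => // /eqP e; exfalso.
  have e' : F J = delta lam by rewrite eJ0 eT /F cardsT card_ord e.
  by have := hfull _ (hNle J hJ e'); move/eqP: hne.
move=> J hJ; rewrite leNgt; apply/negP => hlt.
have hC : 0 < sJ (~: J) by move: hlt; rewrite (sJ_split J); lra.
have hJT : J != setT by apply/eqP => e; move: hlt; rewrite e ltxx.
have hCT : ~: J != setT.
  apply/eqP => e; have : J = set0 by rewrite -[J]setCK e setCT.
  by move=> e2; move: hJ; rewrite e2 sJ0 ltxx.
have h1 := hgt J hJ hJT; have h2 := hgt _ hC hCT.
have hc := cardsC J; rewrite card_ord in hc.
have cJ : (0 < #|J|)%N.
  rewrite card_gt0; apply/eqP => e; move: hJ; rewrite e sJ0 ltxx //.
have cC : (0 < #|~: J|)%N.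
  rewrite card_gt0; apply/eqP => e; move: hC; rewrite e sJ0 ltxx //.
have n0 : (0 < n)%N by lia.
move: h1 h2; rewrite /F ltr_pdivlMr ?ltr0n // ltr_pdivlMr ?ltr0n //.
set t := sJ setT / n%:R.
have htN : t * n%:R = sJ setT by rewrite /t mulfVK // pnatr_eq0 -lt0n.
have eN : (n%:R : R) = #|J|%:R + #|~: J|%:R by rewrite -natrD hc.
have hs := sJ_split J.
rewrite eN mulrDr in htN.
lra.
Qed.
End Key.


Lemma take_cat_le (T : Type) i (X Y : seq T) :
  take i (X ++ Y) = if (i <= size X)%N then take i X else X ++ take (i - size X) Y.
Proof.
rewrite take_cat; case: (ltngtP i (size X)) => h //=.
by rewrite h take_size subnn take0 cats0.
Qed.

Lemma take_addcat (T : Type) j (X Y : seq T) : take (size X + j) (X ++ Y) = X ++ take j Y.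
Proof. by rewrite takeD take_size_cat // drop_size_cat. Qed.

Section Part2.
Variables (R : realFieldType) (n : nat) (lam : 'I_n -> R).
Local Notation ssum := (ssum lam).
Local Notation sJ := (sJ lam).

Lemma block_nonempty (Q : seq {set 'I_n}) : is_block lam Q -> (0 < size Q)%N.
Proof. by case=> _ [c [hc _]]; apply: leq_ltn_trans hc. Qed.

Lemma block_sum_pos Q : is_block lam Q -> positive lam Q -> 0 < ssum Q.
Proof. by move=> hb hp; have [h _] := hb; rewrite ssum_supp. Qed.

Lemma block_sum_neg Q : is_block lam Q -> negative lam Q -> ssum Q <= 0.
Proof.
move=> hb hn; have [h _] := hb; rewrite ssum_supp // leNgt; exact/negP.
Qed.

Lemma part2 (P : seq {set 'I_n}) (Qs : seq (seq {set 'I_n})) (l : nat) :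
     Pord P -> block_decomp lam P Qs -> (l.+1 < size Qs)%N ->
     Pord_lam lam P ->
     negative lam (nth [::] Qs l) \/ positive lam (nth [::] Qs l.+1) ->
     let P' := flatten (take l Qs ++ [:: nth [::] Qs l.+1; nth [::] Qs l] ++ drop l.+2 Qs) in
     [/\ Pord_lam lam P', size P' = size P &
         eps R P' = (-1) ^+ (#|supp (nth [::] Qs l)| * #|supp (nth [::] Qs l.+1)|) * eps R P].
Proof.
move=> hP [hbl eP] hl [_ hpos] hor P'.
set Qa := nth [::] Qs l; set Qb := nth [::] Qs l.+1.
set A := flatten (take l Qs); set D := flatten (drop l.+2 Qs).
have eQs : Qs = take l Qs ++ Qa :: Qb :: drop l.+2 Qs.
  by rewrite -{1}(cat_take_drop l Qs) (drop_nth [::] (ltnW hl)) (drop_nth [::] hl).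
have eP2 : P = A ++ Qa ++ Qb ++ D by rewrite eP {1}eQs flatten_cat.
have eP' : P' = A ++ Qb ++ Qa ++ D by rewrite /P' flatten_cat.
have hba : is_block lam Qa by apply: hbl; rewrite mem_nth // ltnW.
have hbb : is_block lam Qb by apply: hbl; rewrite mem_nth.
have na := block_nonempty hba; have nb := block_nonempty hbb.
have hperm : perm_eq P P'.
  rewrite eP2 eP'; apply/seq.permP => f; rewrite !count_cat; lia.
have hsz : size P' = size P by rewrite (perm_size hperm).
have hop := hP.1.
have hop2 : opart (A ++ Qa ++ Qb ++ D) by rewrite -eP2.
have [oA oaD] := opart_cat hop2.
have [oa obD] := opart_cat oaD.
have [ob oD] := opart_cat obD.
split => //; last first.
  rewrite !eps_sgnw eP' eP2 !map_cat !flatten_cat.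
  rewrite sgnw_blocks; last by rewrite -!flatten_cat -!map_cat -eP2 uniq_fme.
  by rewrite !size_fme.
have hPord : Pord P'.
  split; first exact: opart_perm hperm hop.
  by rewrite -hP.2 /supp (perm_big _ hperm).
split => // i /andP[hi1 hi2].
have hi3 : (i <= size (A ++ Qa ++ Qb ++ D))%N by rewrite -eP2 -hsz.
have hpre : forall j, (1 <= j <= size P)%N -> 0 < ssum (take j P) by [].
have fA : 0 <= ssum A.
  case: (posnP (size A)) => hA.
    by move/eqP: hA; rewrite size_eq0 => /eqP ->; rewrite ssum_nil.
  apply: ltW; have := hpre (size A); rewrite eP2 take_size_cat // => -> //.
  by rewrite hA /= size_cat leq_addr.
have fPa : forall j, (1 <= j <= size Qa)%N -> 0 < ssum A + ssum (take j Qa).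
  move=> j /andP[j1 j2]; have := hpre (size A + j).
  rewrite eP2 take_addcat take_cat_le j2 ssum_cat; apply.
  rewrite !size_cat; lia.
have fPb : forall j, (j <= size Qb)%N -> 0 < ssum A + ssum Qa + ssum (take j Qb).
  move=> j j2; have := hpre (size A + (size Qa + j)).
  rewrite eP2 take_addcat take_addcat take_cat_le j2 /= !ssum_cat => h; rewrite -addrA; apply: h.
  rewrite !size_cat; lia.
have fPD : forall j, (j <= size D)%N -> 0 < ssum A + ssum Qa + ssum Qb + ssum (take j D).
  move=> j j2; have := hpre (size A + (size Qa + (size Qb + j))).
  rewrite eP2 !take_addcat !ssum_cat => h; rewrite -!addrA; apply: h.
  rewrite !size_cat; lia.
have sQa : ssum Qa = ssum (take (size Qa) Qa) by rewrite take_size.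
rewrite eP' take_cat_le; case: ifPn => h1.
  have := hpre i; rewrite eP2 take_cat_le h1; apply.
  by rewrite hi1 hi3.
rewrite -ltnNge in h1; rewrite ssum_cat take_cat_le; case: ifPn => h2.
  case: hor => [hn|hp].
    have := block_sum_neg hba hn; have := fPb (i - size A)%N h2; lra.
  have := block_pos hbb hp (i := (i - size A)%N); rewrite h2 subn_gt0 h1 => /(_ isT).
  lra.
rewrite -ltnNge in h2; rewrite ssum_cat take_cat_le; case: ifPn => h3.
  case: hor => [hn|hp].
    have := fPb (size Qb) (leqnn _); rewrite take_size.
    have := ssum_td lam (i - size A - size Qb)%N Qa.
    case: (ltnP (i - size A - size Qb)%N (size Qa)) => h4.
      have := block_neg hba hn h4; lra.
    rewrite drop_oversize // ssum_nil; lra.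
  have := block_pos hbb hp (i := size Qb); rewrite leqnn nb => /(_ isT).
  rewrite take_size.
  have := fPa (i - size A - size Qb)%N; rewrite h3 subn_gt0 h2 => /(_ isT).
  lra.
rewrite -ltnNge in h3; rewrite ssum_cat.
have := fPD (i - size A - size Qb - size Qa)%N.
have -> : (i - size A - size Qb - size Qa <= size D)%N.
  move: hi3; rewrite !size_cat; lia.
move=> /(_ isT); lra.
Qed.

End Part2.


Lemma flatten_nth (T : Type) (s : seq (seq T)) l : (l < size s)%N ->
  flatten s = flatten (take l s) ++ nth [::] s l ++ flatten (drop l.+1 s).
Proof.
move=> hl; by rewrite -{1}(cat_take_drop l s) (drop_nth [::] hl) flatten_cat.
Qed.

Lemma path_map_sub m (s : seq nat) a : (m <= a)%N -> all (fun j => m <= j)%N s -> path ltn a s ->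
  path ltn (a - m)%N (map (subn^~ m) s).
Proof.
elim: s a => [|b s IH] a //= ha /andP[hb hs] /andP[hab hp].
rewrite IH // andbT; lia.
Qed.

Lemma sorted_map_sub m (s : seq nat) : all (fun j => m <= j)%N s -> sorted ltn s ->
  sorted ltn (map (subn^~ m) s).
Proof.
case: s => [|a s] //= /andP[ha hs] hp; exact: path_map_sub.
Qed.

Lemma cut_gen (R : realFieldType) (f : nat -> R) lo hi : (lo <= hi)%N ->
  exists m, [/\ (lo <= m <= hi)%N, (forall j, (lo <= j < m)%N -> f m <= f j) &
      (forall j, (m < j <= hi)%N -> f m < f j)].
Proof.
elim: hi => [|hi IH] hle.
  by exists 0%N; split; [lia | move=> j; lia | move=> j; lia].
case: (ltngtP lo hi.+1) => hl; last first.
- by exists hi.+1; split; [lia | move=> j; lia | move=> j; lia].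
- lia.
have [m [hm h1 h2]] := IH hl.
case: (leP (f hi.+1) (f m)) => hf.
  exists hi.+1; split; [lia | | move=> j; lia].
  move=> j hj; case: (ltngtP j m) => hjm.
  - apply: le_trans hf _; apply: h1; lia.
  - apply: (le_trans hf); apply: ltW; apply: h2; lia.
  - by rewrite hjm.
exists m; split; [lia | exact: h1 | ].
move=> j hj; case: (ltngtP j hi.+1) => hjh.
- apply: h2; lia.
- lia.
- by rewrite hjh.
Qed.

Section Part3.
Variables (R : realFieldType) (n : nat) (lam : 'I_n -> R).
Local Notation ssum := (ssum lam).
Local Notation sJ := (sJ lam).

Definition Vd (P : seq {set 'I_n}) (idx : seq nat) (Qs : seq (seq {set 'I_n})) : Prop :=
  [/\ P = flatten Qs, size Qs = size idx &
  forall l, (l < size idx)%N -> (size (flatten (take l Qs)) <= nth 0%N idx l)%N /\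
     center_pos lam (nth [::] Qs l) (nth 0%N idx l - size (flatten (take l Qs)))].

Lemma Vd_nil P Qs : Vd P [::] Qs -> Qs = [::].
Proof. by case=> _ /eqP; rewrite size_eq0 => /eqP. Qed.

Lemma Vd_cons P i idx Q Qs :
  Vd P (i :: idx) (Q :: Qs) <->
  [/\ P = Q ++ flatten Qs, center_pos lam Q i, all (fun j => size Q <= j)%N idx &
      Vd (flatten Qs) (map (subn^~ (size Q)) idx) Qs].
Proof.
split.
  case=> eP [] hs h; split => //.
  - by have := h 0%N isT; rewrite take0 /= subn0 => -[].
  - apply/(all_nthP 0%N) => l hl; have := h l.+1 hl; rewrite /= size_cat.
    by case=> h1 _; apply: leq_trans (leq_addr _ _) h1.
  - split; rewrite ?size_map //.
    move=> l hl; have := h l.+1 hl; rewrite /= size_cat (nth_map 0%N) //.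
    by case=> h1 h2; split; [lia | rewrite subnDA in h2].
case=> eP hc /(all_nthP 0%N) ha [e1 e2 h]; split => //.
- by rewrite /= e2 size_map.
- case=> [|l] /=; first by split; rewrite /= ?take0 /= ?subn0.
  move=> hl; have := h l; rewrite size_map (nth_map 0%N) // => /(_ hl) [h1 h2].
  have := ha l hl; rewrite size_cat subnDA; split => //; lia.
Qed.

Definition Tt (P : seq {set 'I_n}) j := ssum (take j P).

Definition Cut P i i' m := [/\ (i < m <= i')%N,
  (forall j, (i < j < m)%N -> Tt P m <= Tt P j) &
  (forall j, (m < j <= i')%N -> Tt P m < Tt P j)].

Lemma cut_uniq P i i' m1 m2 : Cut P i i' m1 -> Cut P i i' m2 -> m1 = m2.
Proof.
wlog: m1 m2 / (m1 <= m2)%N.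
  move=> W h1 h2; case: (leqP m1 m2) => h; first exact: W.
  by apply/esym/W => //; apply: ltnW.
move=> hle [hm1 a1 b1] [hm2 a2 b2]; case: (ltngtP m1 m2) => // hlt.
- have : Tt P m2 <= Tt P m1 by apply: a2; lia.
  have : Tt P m1 < Tt P m2 by apply: b1; lia.
  by move=> h1 h2; have := lt_le_trans h1 h2; rewrite ltxx.
- lia.
Qed.

Lemma cut_ex P i i' : (i < i')%N -> exists m, Cut P i i' m.
Proof.
move=> hii; have [m [hm h1 h2]] := cut_gen (Tt P) hii.
exists m; split => //.
Qed.

Lemma Tt_cat P Q j : Tt (P ++ Q) (size P + j) = ssum P + Tt Q j.
Proof. by rewrite /Tt take_addcat ssum_cat. Qed.

Lemma Vd_cut P i i' rest Q Qs : Vd P (i :: i' :: rest) (Q :: Qs) -> Cut P i i' (size Q).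
Proof.
case/Vd_cons => eP hc /andP[hi' _] hV.
case: Qs eP hV => [|Q' Qs] eP hV; first by case: hV.
case/Vd_cons: hV => /= e2 hc' _ _.
split.
- by rewrite hi' andbT; case: hc.
- move=> j hj; rewrite /Tt eP take_size_cat // (ssum_td lam j Q).
  rewrite take_cat_le ifT; last by lia.
  have := cp_suf hc (j := j); move=> /(_ ltac:(lia)); lra.
- move=> j hj.
  have ej : j = (size Q + (j - size Q))%N by lia.
  have hq' := hc'.1.
  have -> : Tt P j = Tt P (size Q + (j - size Q)) by rewrite -ej.
  rewrite /Tt eP take_size_cat // -/(Tt _ _) Tt_cat /Tt /=.
  rewrite take_cat_le ifT; last by lia.
  have := cp_pre hc' (j := (j - size Q)%N); move=> /(_ ltac:(lia)); lra.
Qed.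


Lemma G_uniq k : forall idx P Qs1 Qs2, size idx = k -> Vd P idx Qs1 -> Vd P idx Qs2 -> Qs1 = Qs2.
Proof.
elim: k => [|k IH] idx P Qs1 Qs2 hk h1 h2.
  move/eqP: hk; rewrite size_eq0 => /eqP e; subst idx.
  by rewrite (Vd_nil h1) (Vd_nil h2).
case: idx hk h1 h2 => [|i idx] //= [hk] h1 h2.
case: Qs1 h1 => [|Q1 Qs1] h1; first by case: h1 => _ e _; discriminate.
case: Qs2 h2 => [|Q2 Qs2] h2; first by case: h2 => _ e _; discriminate.
case: idx hk h1 h2 => [|i' rest] hk h1 h2.
  case/Vd_cons: h1 => E1 _ _ V1; case/Vd_cons: h2 => E2 _ _ V2.
  have e1 := Vd_nil V1; have e2 := Vd_nil V2; subst Qs1 Qs2.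
  by move: E1 E2; rewrite /= !cats0 => <- <-.
have em : size Q1 = size Q2 by apply: cut_uniq (Vd_cut h1) (Vd_cut h2).
case/Vd_cons: h1 => E1 _ _ V1; case/Vd_cons: h2 => E2 _ _ V2.
have eQ1 : Q1 = take (size Q1) P by rewrite E1 take_size_cat.
have eQ2 : Q2 = take (size Q1) P by rewrite em E2 take_size_cat.
have eF1 : flatten Qs1 = drop (size Q1) P by rewrite E1 drop_size_cat.
have eF2 : flatten Qs2 = drop (size Q1) P by rewrite em E2 drop_size_cat.
rewrite eF1 in V1; rewrite eF2 -em in V2.
congr (_ :: _); first by rewrite eQ1 -eQ2.
apply: IH V1 V2; by rewrite size_map.
Qed.

Lemma G_ex k : forall idx P, size idx = k.+1 -> sorted ltn idx ->
  all (fun i => i < size P)%N idx ->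
  (forall j, (1 <= j <= head 0%N idx)%N -> 0 < Tt P j) ->
  (forall j, (last 0%N idx < j < size P)%N -> ssum (drop j P) <= 0) ->
  exists Qs, Vd P idx Qs.
Proof.
elim: k => [|k IH] [|i idx] P //= [hk] hs ha hpre hsuf.
  move/eqP: hk; rewrite size_eq0 => /eqP e; subst idx.
  exists [:: P]; apply/Vd_cons; split => //.
  - by rewrite /= cats0.
  - split; first by move: ha; rewrite andbT.
    split; first exact: hpre.
    move=> j hj; apply: hsuf; exact: hj.
case: idx hk hs ha hsuf => [|i' rest] // hk /= /andP[hii hp] /and3P[hi hi' hrest] hsuf.
have [m [hm hc1 hc2]] := cut_ex P hii.
have hmP : (m <= size P)%N by lia.
have hallm : all (fun j => m <= j)%N (i' :: rest).
  rewrite /= (leq_trans _ (leqnn i')) ?(andP hm).2 //=.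
  apply/allP => x hx; have := order_path_min ltn_trans hp.
  move/allP => /(_ x hx) hx'; lia.
have [Qs' hV] : exists Qs', Vd (drop m P) (map (subn^~ m) (i' :: rest)) Qs'.
  apply: IH.
  - by rewrite size_map -hk.
  - exact: sorted_map_sub.
  - apply/allP => x /mapP[y hy ->]; rewrite size_drop.
    move/allP: hallm => /(_ y hy) hmy.
    have : (y < size P)%N by move: hy; rewrite inE => /orP[/eqP ->|/(allP hrest)].
    lia.
  - move=> j /= hj.
    have := hc2 (m + j)%N; rewrite /Tt.
    rewrite takeD ssum_cat => h; have := h ltac:(lia); lra.
  - move=> j /=; rewrite (last_map (subn^~ m) rest i') => hj.
    rewrite drop_drop; apply: hsuf.
    have : (m <= last i' rest)%N.
      move/allP: hallm; apply; by rewrite mem_last.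
    rewrite size_drop in hj; lia.
case: hV => eP' hsz hV.
exists (take m P :: Qs'); apply/Vd_cons.
have hsm : size (take m P) = m by rewrite size_takel.
rewrite hsm; split => //.
- by rewrite -eP' cat_take_drop.
- split; first by lia.
  split.
    move=> j hj; rewrite take_takel; last by lia.
    exact: hpre.
  move=> j hj; have e := ssum_td lam j (take m P).
  rewrite take_takel in e; last by lia.
  rewrite hsm in hj; have := hc1 j hj; rewrite /Tt; lra.
Qed.

End Part3.


Section Part4.
Variables (R : realFieldType) (n : nat) (lam : 'I_n -> R).
Local Notation ssum := (ssum lam).
Local Notation sJ := (sJ lam).

Lemma D_to_Vd P idx Qs : opart P -> all (fun i => i < size P)%N idx ->
  block_decomp lam P Qs -> size Qs = size idx ->
  (forall l, (l < size idx)%N -> is_center lam (nth [::] Qs l) (nth set0 P (nth 0%N idx l))) ->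
  Vd lam P idx Qs.
Proof.
move=> hop ha [hb eP] hsz hc; split => // l hl.
have [_ [c [ec hcp]]] := hc l hl.
have hlQ : (l < size Qs)%N by rewrite hsz.
have eP2 := flatten_nth hlQ; rewrite -eP in eP2.
set A := flatten (take l Qs) in eP2 *.
have hcs := hcp.1.
have e1 : nth set0 P (size A + c) = nth set0 (nth [::] Qs l) c.
  by rewrite eP2 nth_cat ltnNge leq_addr /= addKn nth_cat hcs.
have hlt : (size A + c < size P)%N by rewrite eP2 !size_cat; lia.
have hil : (nth 0%N idx l < size P)%N by apply: (all_nthP 0%N ha).
have : size A + c = nth 0%N idx l.
  apply/eqP; rewrite -(nth_uniq set0 hlt hil (opart_uniq hop)) e1 ec //.
move=> <-; split; first exact: leq_addr.
by rewrite addKn.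
Qed.

Lemma Vd_to_D P idx Qs : opart P -> Vd lam P idx Qs ->
  [/\ block_decomp lam P Qs, size Qs = size idx &
  (forall l, (l < size idx)%N -> is_center lam (nth [::] Qs l) (nth set0 P (nth 0%N idx l)))].
Proof.
move=> hop [eP hsz hV].
have hopl : forall l, (l < size Qs)%N -> opart (nth [::] Qs l).
  move=> l hl; have := flatten_nth hl; rewrite -eP => e.
  move: hop; rewrite e => /opart_cat [_] /opart_cat [] //.
split => //.
  split => // Q /(nthP [::]) [l hl <-]; split; first exact: hopl.
  have hl' : (l < size idx)%N by rewrite -hsz.
  by have [_ h] := hV l hl'; exists (nth 0%N idx l - size (flatten (take l Qs)))%N.
move=> l hl; have hl' : (l < size Qs)%N by rewrite hsz.
have [h1 h2] := hV l hl; split; first exact: hopl.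
exists (nth 0%N idx l - size (flatten (take l Qs)))%N; split => //.
have eP2 := flatten_nth hl'; rewrite -eP in eP2.
have hcs := h2.1.
rewrite eP2 nth_cat ltnNge; set o := size (flatten (take l Qs)) in h1 hcs *.
rewrite /= ifF; last by rewrite h1.
by rewrite nth_cat hcs.
Qed.

Lemma keyP P : 0 < sJ setT -> Nlam lam = n -> Pord_lam lam P ->
  forall j, (1 <= j)%N -> ssum (drop j P) <= 0.
Proof.
move=> hT hN [[hop hsupp] hpos] j hj.
case: (leqP j (size P)) => hjP; last by rewrite drop_oversize ?ssum_nil // ltnW.
have hp := hpos j; rewrite hj hjP in hp; have {}hp := hp isT.
have hop2 : opart (take j P ++ drop j P) by rewrite cat_take_drop.
have [ho1 _] := opart_cat hop2.
have hk := key hT hN (J := supp (take j P)).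
rewrite -ssum_supp // in hk; have {}hk := hk hp.
have e := ssum_td lam j P.
rewrite ssum_supp // hsupp in e.
lra.
Qed.

End Part4.


Unset Implicit Arguments.

Lemma sft_pos (T : Type) (Qs : seq (seq T)) k : (0 < k)%N ->
  (0 < size (nth [::] Qs 0))%N -> (0 < size (flatten (take k Qs)))%N.
Proof. case: Qs => [|Q Qs] //; case: k => // k _ /= h; rewrite size_cat; lia. Qed.

Theorem mainTheorem15 (R : realFieldType) (n : nat) (lam : 'I_n -> R) :
  (* (i) *)
  (forall Q : seq {set 'I_n}, is_block lam Q ->
     (positive lam Q -> forall i, (1 <= i <= size Q)%N -> 0 < ssum lam (take i Q)) /\
     (negative lam Q -> forall i, (i < size Q)%N -> ssum lam (drop i Q) <= 0)) /\
  (* (ii) *)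
  (forall (P : seq {set 'I_n}) (Qs : seq (seq {set 'I_n})) (l : nat),
     Pord P -> block_decomp lam P Qs -> (l.+1 < size Qs)%N ->
     Pord_lam lam P ->
     negative lam (nth [::] Qs l) \/ positive lam (nth [::] Qs l.+1) ->
     let P' := flatten (take l Qs ++ [:: nth [::] Qs l.+1; nth [::] Qs l] ++ drop l.+2 Qs) in
     [/\ Pord_lam lam P', size P' = size P &
         eps R P' = (-1) ^+ (#|supp (nth [::] Qs l)| * #|supp (nth [::] Qs l.+1)|) * eps R P]) /\
  (0 < sJ lam setT -> Nlam lam = n ->
   (* (iii) *)
   (forall (P : seq {set 'I_n}) (idx : seq nat),
      Pord_lam lam P -> (1 <= size idx <= size P)%N -> sorted ltn idx ->
      all (fun i => i < size P)%N idx ->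
      let D := fun Qs : seq (seq {set 'I_n}) =>
        block_decomp lam P Qs /\ size Qs = size idx /\
        (forall l, (l < size idx)%N ->
           is_center lam (nth [::] Qs l) (nth set0 P (nth 0%N idx l))) in
      (exists! Qs, D Qs) /\
      (forall Qs, D Qs -> positive lam (nth [::] Qs 0) /\
         ((2 <= size idx)%N -> negative lam (nth [::] Qs (size idx).-1)))) /\
   (* (iv) *)
   (forall (P : seq {set 'I_n}) (Qs : seq (seq {set 'I_n})),
      Pord_lam lam P -> block_decomp lam P Qs ->
      (exists! s, (s < size P)%N /\ Pord_lam lam (rot s P)) /\
      (forall s, (s < size P)%N -> Pord_lam lam (rot s P) ->
         exists! l, (l < size Qs)%N /\ rot s P = flatten (rot l Qs)))).
Proof.
split.
  move=> Q hb; split; [exact: block_pos | exact: block_neg].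
split.
  move=> P Qs l hP hbd hl hPl hor; exact: part2.
move=> hT hN; split.
- move=> P idx hPl /andP[hk1 hk2] hs ha D.
  have hop := hPl.1.1.
  have equiv : forall Qs, D Qs <-> Vd lam P idx Qs.
    move=> Qs; split.
      by case=> hbd [hsz hc]; exact: D_to_Vd.
    by move=> hV; have [h1 h2 h3] := Vd_to_D hop hV; split.
  have hex : exists Qs, Vd lam P idx Qs.
    case: idx hk1 hk2 hs ha D equiv => [|i idx] // _ hk2 hs ha D equiv.
    apply: (@G_ex R n lam (size idx)) => //.
    + move=> j /= hj; apply: hPl.2; move: ha => /= /andP[hi _]; lia.
    + move=> j hj; apply: (keyP hT hN hPl); lia.
  split.
    have [Qs hQs] := hex; exists Qs; split; first by apply/equiv.
    by move=> Qs' /equiv hQs'; exact: (G_uniq erefl hQs hQs').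
  move=> Qs /equiv hV; have [[hb eP] hsz hc] := Vd_to_D hop hV.
  have hlQ : (0 < size Qs)%N by rewrite hsz.
  have hb0 : is_block lam (nth [::] Qs 0) by apply: hb; rewrite mem_nth.
  have n0 := block_nonempty hb0.
  split.
    rewrite /positive -ssum_supp; last exact: hb0.1.
    have e := flatten_nth hlQ; rewrite -eP take0 /= in e.
    have := hPl.2 (size (nth [::] Qs 0)); rewrite {2}e take_size_cat //; apply.
    by rewrite n0 e size_cat leq_addr.
  move=> h2.
  have hlQ' : ((size idx).-1 < size Qs)%N by rewrite hsz; lia.
  have hbl : is_block lam (nth [::] Qs (size idx).-1) by apply: hb; rewrite mem_nth.
  rewrite /negative /positive -ssum_supp; last exact: hbl.1.
  have e := flatten_nth hlQ'; rewrite -eP in e.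
  have hdr : drop (size idx).-1.+1 Qs = [::].
    by apply: drop_oversize; rewrite hsz; lia.
  rewrite hdr /= cats0 in e.
  set A := flatten (take (size idx).-1 Qs) in e.
  have hA : (1 <= size A)%N by apply: sft_pos => //; lia.
  have := keyP hT hN hPl hA; rewrite {1}e drop_size_cat // => h.
  by apply/negP; rewrite -leNgt.
- move=> P Qs hPl [hb eP].
  have hPn : (0 < size P)%N.
    case: P hPl {eP} => [|I P] // [[_ hs] _]; move: hT.
    by rewrite -hs supp_nil sJ0 ltxx.
  have hs0 : forall s, (s < size P)%N -> Pord_lam lam (rot s P) -> s = 0%N.
    move=> s hs hr; apply/eqP; rewrite -leqn0 leqNgt; apply/negP => s0.
    have := hr.2 (size P - s)%N; rewrite size_rot.
    have -> : take (size P - s) (rot s P) = drop s P.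
      by rewrite /rot take_size_cat // size_drop.
    move=> h; have := h ltac:(lia); have := keyP hT hN hPl s0.
    by move=> a b; have := lt_le_trans b a; rewrite ltxx.
  split.
    exists 0%N; split; first by split => //; rewrite rot0.
    by move=> s [hs hr]; apply/esym/hs0.
  move=> s hs hr; have e := hs0 s hs hr; subst s; rewrite rot0.
  have hQn : (0 < size Qs)%N.
    by case: Qs hb eP => [|Q Qs] // _ eP; move: hPn; rewrite eP.
  exists 0%N; split; first by split => //; rewrite rot0.
  move=> l [hl e]; apply/eqP; rewrite eq_sym -leqn0 leqNgt; apply/negP => l0.
  have u := opart_uniq hPl.1.1.
  rewrite eP /rot flatten_cat in e.
  rewrite eP -(cat_take_drop l Qs) flatten_cat in u.
  move: e u; rewrite -{1}(cat_take_drop l Qs) flatten_cat.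
  have nA : (0 < size (flatten (take l Qs)))%N.
    apply: sft_pos => //; apply: block_nonempty; apply: hb; exact: mem_nth.
  have nB : (0 < size (flatten (drop l Qs)))%N.
    rewrite (drop_nth [::] hl) /= size_cat.
    by move: (block_nonempty (hb _ (mem_nth [::] hl))) => h; apply: leq_trans h (leq_addr _ _).
  case: (flatten (take l Qs)) nA => [|a A] // _.
  case: (flatten (drop l Qs)) nB => [|b B] // _.
  by move=> /= [<-] _ /=; rewrite mem_cat mem_head orbT.
Qed.
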